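(* Let $a<b$ with $[a,b]\subset[0,\infty)$, let $f,g:[a,b]\to\mathbb{R}$ be integrable with $0\le g(t)\le1$ for all $t\in[a,b]$ and such that $\int_a^b g(t)f'(t)\,dt$ exists. Suppose $f$ is absolutely continuous on $[a,b]$ and $|f'|$ is convex on $[a,b]$. Let $\lambda:=\int_a^b g(t)\,dt$. Then $$\left|\int_a^{a+\lambda} f(t)\,dt-\int_a^b f(t)g(t)\,dt\right|\le\frac16\lambda^2|f'(a)|+\frac13\left[\lambda^2+(b-a-\lambda)^2\right]|f'(a+\lambda)|+\frac16(b-a-\lambda)^2|f'(b)|,$$ and $$\left|\int_a^b f(t)g(t)\,dt-\int_{b-\lambda}^b f(t)\,dt\right|\le\frac16\lambda^2|f'(b)|+\frac13\left[\lambda^2+(b-a-\lambda)^2\right]|f'(b-\lambda)|+\frac16(b-a-\lambda)^2|f'(a)|.$$ *)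

(* Defs.v *)
From HB Require Import structures.
From mathcomp Require Import all_boot all_order all_algebra.
From mathcomp Require Import all_classical all_reals all_analysis.
Set Implicit Arguments. Unset Strict Implicit. Unset Printing Implicit Defensive.
Import Order.TTheory GRing.Theory Num.Theory.
Import numFieldNormedType.Exports.
Local Open Scope classical_set_scope.
Local Open Scope ring_scope.

Definition abs_continuous_on (R : realType) (a b : R) (f : R -> R) : Prop :=
  forall eps : R, 0 < eps -> exists2 delta : R, 0 < delta &
    forall (n : nat) (u v : nat -> R),
      (forall i, (i < n)%N -> a <= u i /\ u i <= v i /\ v i <= b) ->
      (forall i j, (i < n)%N -> (j < n)%N -> i <> j -> v i <= u j \/ v j <= u i) ->
      \sum_(i < n) (v i - u i) < delta ->
      \sum_(i < n) `|f (v i) - f (u i)| < eps.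

Definition convex_on (R : realType) (a b : R) (h : R -> R) : Prop :=
  forall x y t : R, a <= x <= b -> a <= y <= b -> 0 <= t <= 1 ->
    h (t * x + (1 - t) * y) <= t * h x + (1 - t) * h y.

(* Main.v *)
Require Import Defs.
From HB Require Import structures.
From mathcomp Require Import all_boot all_order all_algebra.
From mathcomp Require Import all_classical all_reals all_analysis.
From mathcomp Require Import ring lra measurable_realfun.
Import Order.TTheory GRing.Theory Num.Theory.
Import numFieldNormedType.Exports.
Local Open Scope classical_set_scope.
Local Open Scope ring_scope.

Section S2.
Context {R : realType}.
Notation mu := (@lebesgue_measure R).

Lemma ac_cont (a b : R) f : abs_continuous_on a b f ->
  forall e, 0 < e -> exists2 d, 0 < d & forall x y, a <= x -> x <= y -> y <= b ->
    y - x < d -> `|f y - f x| < e.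
Proof.
move=> ac e e0; have [d d0 H] := ac e e0; exists d => // x y ax xy yb yxd.
have := H 1%N (fun _ => x) (fun _ => y).
rewrite !big_ord1; apply => //.
by move=> i j; rewrite !ltnS !leqn0 => /eqP -> /eqP ->.
Qed.

Lemma len_le n (p q : nat -> R) (U : set R) : measurable U ->
  (forall i, (i < n)%N -> p i <= q i) ->
  (forall i j, (i < n)%N -> (j < n)%N -> i <> j -> q i <= p j \/ q j <= p i) ->
  (forall i, (i < n)%N -> `]p i, q i] `<=` U) ->
  ((\sum_(i < n) (q i - p i))%:E <= mu U)%E.
Proof.
move=> mU pq dis sub.
pose F i := `]p i, q i]%classic : set R.
have mF : forall k, (k < n)%N -> measurable (F k) by move=> k _; exact: measurable_itv.
have tF : trivIset `I_n F.
  move=> i j /= ii jj [x []]; rewrite /F /= !in_itv /= => /andP[? ?] /andP[? ?].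
  apply/eqP/negP => /negP ij.
  have [] := dis i j ii jj (fun e => negP ij (introT eqP e)) => ?; lra.
have mUF : measurable (\big[setU/set0]_(k < n) F k).
  by apply: bigsetU_measurable => k _; exact: measurable_itv.
rewrite -sumEFin.
have -> : (\sum_(i < n) (q i - p i)%:E = \sum_(i < n) mu (F i))%E.
  apply: eq_bigr => i _; rewrite /F lebesgue_measure_itv /= lte_fin.
  have := pq i (ltn_ord i); rewrite le_eqVlt => /predU1P[->|->//].
  by rewrite ltxx subrr.
rewrite -measure_semi_additive_ord_I //.
apply: le_measure; rewrite ?inE //.
move=> x /=; rewrite -bigcup_seq => -[i /= _]; exact: sub (ltn_ord i) x.
Qed.
Lemma int_quad (p q K0 K1 K2 : R) : p <= q ->
  \int[mu]_(t in `[p, q]) (K0 + K1 * (t - p) ^+ 2 + K2 * (q - t) ^+ 2)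
  = K0 * (q - p) + (K1 + K2) * (q - p) ^+ 3 / 3.
Proof.
rewrite le_eqVlt => /predU1P[<-|pq].
  by rewrite set_itv1 Rintegral_set1 subrr expr0n /= !mulr0 mul0r addr0.
pose P : {poly R} := K0 *: 'X + (K1 / 3) *: ('X - p%:P) ^+ 3
   - (K2 / 3) *: (q%:P - 'X) ^+ 3.
have eP : (fun t => K0 + K1 * (t - p) ^+ 2 + K2 * (q - t) ^+ 2) = horner (P^`()).
  apply/funext => t.
  rewrite /P derivB derivD !derivZ !deriv_exp derivXsubC derivB derivC derivX /= !hornerE /=.
  by field.
rewrite /Rintegral.
have := @continuous_FTC2 R _ (horner P) p q pq.
move=> H; rewrite H; clear H.
- rewrite /P !hornerE /=. by field.
- rewrite eP; apply: continuous_subspaceT; exact: continuous_horner.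
- split.
  + by move=> x _; exact: ex_derive.
  + apply: cvg_at_right_filter; exact: continuous_horner.
  + apply: cvg_at_left_filter; exact: continuous_horner.
- move=> x _; rewrite derive1E derive_val.
  by have := congr1 (fun F => F x) eP => /= ->.
Qed.

End S2.

Section S3.
Context {R : realType}.
Notation mu := (@lebesgue_measure R).

Definition fam (u t : R) (U : set R) n (p q : nat -> R) :=
  [/\ (forall i, (i < n)%N -> u <= p i /\ p i <= q i /\ q i <= t),
      (forall i j, (i < n)%N -> (j < n)%N -> i <> j -> q i <= p j \/ q j <= p i)
    & (forall i, (i < n)%N -> `]p i, q i] `<=` U)].

Lemma fam_weaken u s t U n p q : s <= t -> fam u s U n p q -> fam u t U n p q.
Proof.
move=> st [H1 H2 H3]; split => // i ilt.
have [? [? ?]] := H1 i ilt; split => //; split => //; exact: le_trans st.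
Qed.

Lemma fam_ext u s t U n p q (h : R -> R) : u <= s -> s <= t -> `]s, t] `<=` U ->
  fam u s U n p q ->
  let p' := fun i => if i == n then s else p i in
  let q' := fun i => if i == n then t else q i in
  fam u t U n.+1 p' q' /\
  \sum_(i < n.+1) `|h (q' i) - h (p' i)| =
    \sum_(i < n) `|h (q i) - h (p i)| + `|h t - h s|.
Proof.
move=> us st sU [H1 H2 H3] p' q'; split; last first.
  rewrite big_ord_recr /= /p' /q' eqxx; congr (_ + _).
  by apply: eq_bigr => i _; rewrite ltn_eqF.
split.
- move=> i; rewrite ltnS leq_eqVlt => /predU1P[->|ilt].
    by rewrite /p' /q' eqxx; split => //; split.
  rewrite /p' /q' ltn_eqF //; have [? [? ?]] := H1 i ilt.
  split => //; split => //; exact: le_trans st.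
- move=> i j; rewrite ltnS leq_eqVlt => /predU1P[->|ilt];
    rewrite ltnS leq_eqVlt => /predU1P[->|jlt] ij.
  + by [].
  + rewrite /p' /q' eqxx ltn_eqF //; right; have [? [? ?]] := H1 j jlt; lra.
  + rewrite /p' /q' eqxx ltn_eqF //; left; have [? [? ?]] := H1 i ilt; lra.
  + by rewrite /p' /q' !ltn_eqF //; exact: H2.
- move=> i; rewrite ltnS leq_eqVlt => /predU1P[->|ilt].
    by rewrite /p' /q' eqxx.
  by rewrite /p' /q' ltn_eqF //; exact: H3.
Qed.


End S3.

Section S4.
Context {R : realType}.
Notation mu := (@lebesgue_measure R).

Lemma core (a b u v : R) (h : R -> R) (N : set R) :
  a <= u -> u <= v -> v <= b -> abs_continuous_on a b h ->
  measurable N -> mu N = 0 ->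
  (forall s, u <= s -> s < v -> ~ N s -> forall e, 0 < e ->
     exists r, [/\ 0 < r, s + r <= v & h (s + r) - h s <= e * r]) ->
  h v <= h u.
Proof.
move=> au uv vb ac mN N0 step.
have vu2 : 0 < v - u + 2 by lra.
suff H : forall eps, 0 < eps -> h v - h u <= eps * (v - u + 2).
  apply/ler_addgt0Pr => e e0.
  have := H (e / (v - u + 2)) (divr_gt0 e0 vu2).
  rewrite mulrAC -mulrA divff ?mulr1; [lra|exact: lt0r_neq0].
move=> eps eps0.
have [d d0 acd] := ac eps eps0.
have [U [oU NU UNd]] : exists U : set R, [/\ open U, N `<=` U & (mu (U `\` N) < d%:E)%E].
  by apply: lebesgue_regularity_outer => //; move: N0 => /= ->; exact: ltry.
have mU : measurable U := measurable_realfun.open_measurable oU.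
have muU : (mu U < d%:E)%E.
  rewrite -(setDUK NU) measureU //; last by rewrite setDIK.
    by rewrite (_ : (_ N) = 0)%E ?add0e //; exact: N0.
  exact: measurableD.
pose Q t := forall eta, 0 < eta -> exists n p q, fam u t U n p q /\
   h t - h u <= eps * (t - u) + \sum_(i < n) `|h (q i) - h (p i)| + eta.
pose A := [set t | u <= t <= v /\ Q t].
have Qu : Q u.
  move=> eta eta0; exists 0%N, (fun _ => 0), (fun _ => 0); split.
    by split => // i.
  by rewrite big_ord0 !subrr mulr0 !add0r ltW.
have A0 : A !=set0 by exists u; split => //; rewrite lexx uv.
have hsA : has_sup A by split => //; exists v => t [/andP[_ ?] _].
set s := sup A.
have us : u <= s by apply: sup_upper_bound => //; split => //; rewrite lexx uv.
have sv : s <= v by apply: ge_sup => // t [/andP[_ ?] _].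
have Qs : Q s.
  move=> eta eta0.
  have [d1 d10 hc] := @ac_cont R a b h ac _ (divr_gt0 eta0 (ltr0Sn _ 1)).
  have [t [/andP[ut tv] Qt] st] := sup_adherent d10 hsA.
  have ts : t <= s by apply: sup_upper_bound => //; split => //; rewrite ut tv.
  have [n [p [q [Ft Ht]]]] := Qt (eta / 2) (divr_gt0 eta0 (ltr0Sn _ 1)).
  exists n, p, q; split; first exact: fam_weaken Ft.
  have std : s - t < d1 by rewrite /s; lra.
  have := hc t s (le_trans au ut) ts (le_trans sv vb) std.
  move=> /(le_lt_trans (ler_norm _)) hst.
  have : eps * (t - u) <= eps * (s - u) by rewrite ler_wpM2l ?(ltW eps0) //; lra.
  lra.
have sv' : s = v.
  apply/eqP; rewrite eq_le sv /= leNgt; apply/negP => ltsv.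
  have [r [r0 srv Qr]] : exists r, [/\ 0 < r, s + r <= v & Q (s + r)].
    case: (pselect (N s)) => Ns.
    - have Us := NU s Ns.
      have /nbhs_ballP [r /= r0 br] := @open_nbhs_nbhs _ _ _ (conj oU Us).
      pose r' := Num.min (r / 2) (v - s).
      have r'0 : 0 < r' by rewrite lt_min divr_gt0 //= subr_gt0.
      have r'le : r' <= v - s by rewrite ge_min lexx orbT.
      have r'le2 : r' <= r / 2 by rewrite ge_min lexx.
      exists r'; split => //; first lra.
      move=> eta eta0; have [n [p [q [F H]]]] := Qs eta eta0.
      have sU : `]s, s + r'] `<=` U.
        move=> x /=; rewrite in_itv /= => /andP[sx xs]; apply: br.
        rewrite -ball_normE /= ler0_norm; lra.
      have sr : s <= s + r' by lra.
      have [F' sum'] := @fam_ext R u s (s + r') U n p q h us sr sU F.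
      eexists; eexists; eexists; split; first exact: F'.
      rewrite sum'.
      have := ler_norm (h (s + r') - h s).
      have : eps * (s - u) <= eps * (s + r' - u) by rewrite ler_wpM2l ?(ltW eps0) //; lra.
      lra.
    - have [r [r0 srv Hr]] := step s us ltsv Ns eps eps0.
      exists r; split => // eta eta0; have [n [p [q [F H]]]] := Qs eta eta0.
      exists n, p, q; split; first by apply: fam_weaken F; lra.
      have : eps * (s + r - u) = eps * (s - u) + eps * r by ring.
      lra.
  have : s + r <= s.
    apply: sup_upper_bound => //; split => //.
    rewrite srv andbT; lra.
  lra.
have [n [p [q [[F1 F2 F3] H]]]] := Qs eps eps0.
rewrite sv' in F1 H.
have len := @len_le R n p q U mU (fun i ii => (F1 i ii).2.1) F2 F3.
have ltd : \sum_(i < n) (q i - p i) < d by rewrite -lte_fin; exact: le_lt_trans len muU.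
have Fb : forall i, (i < n)%N -> a <= p i /\ p i <= q i /\ q i <= b.
  move=> i ii; have [? [? ?]] := F1 i ii; split; first lra; split; lra.
have := acd n p q Fb F2 ltd.
have : eps * (v - u + 2) = eps * (v - u) + eps + eps by ring.
lra.
Qed.
End S4.

Section S5.
Context {R : realType}.
Notation mu := (@lebesgue_measure R).

Lemma deriv_step (h : R -> R) s v d : is_derive s (1:R) h d -> d <= 0 -> s < v ->
  forall e, 0 < e -> exists r, [/\ 0 < r, s + r <= v & h (s + r) - h s <= e * r].
Proof.
move=> hd d0 sv e e0.
have hc : (fun r : R => r^-1 *: ((h \o shift s) (r *: 1) - h s)) @ 0^' --> d.
  rewrite -(@derive_val _ _ _ _ _ _ _ hd); exact: ex_derive.
have := cvgr_dist_lt _ _ hc e e0.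
have FF : Filter ((0:R)^') by exact: _.
rewrite near_withinE /= => /(_ FF) /nbhs_ballP [r /= r0 Hr].
pose r' := Num.min (r / 2) (v - s).
have r'0 : 0 < r' by rewrite lt_min divr_gt0 //= subr_gt0.
have r'le : r' <= v - s by rewrite ge_min lexx orbT.
have r'le2 : r' <= r / 2 by rewrite ge_min lexx.
exists r'; split => //; first lra.
have := Hr r'.
rewrite -ball_normE /= sub0r normrN gtr0_norm // => /(_ ltac:(lra)) /(_ (lt0r_neq0 r'0)).
have -> : r'%:A + s = s + r' by rewrite addrC; congr (_ + _); exact: mulr1.
rewrite distrC => /(le_lt_trans (ler_norm _)).
set Dq := h (s + r') - h s.
move=> H.
have : r'^-1 * Dq < d + e.
 move: H => H'; have H2 : r'^-1 * Dq - d < e := H'; lra.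
rewrite ltr_pdivrMl //.
have : r' * (d + e) <= r' * e by rewrite ler_wpM2l ?(ltW r'0) //; lra.
rewrite [e * _]mulrC; lra.
Qed.

Lemma ac_lip (a b L k : R) (f Phi : R -> R) : 0 <= L -> `|k| <= 1 ->
  abs_continuous_on a b f ->
  (forall x y, a <= x -> x <= y -> y <= b -> `|Phi y - Phi x| <= L * (y - x)) ->
  abs_continuous_on a b (fun x => k * f x - Phi x).
Proof.
move=> L0 k1 ac lip e e0.
have [d d0 H] := ac (e / 2) (divr_gt0 e0 (ltr0Sn _ 1)).
have L1 : 0 < L + 1 by lra.
pose d' := Num.min d (e / (2 * (L + 1))).
have d'0 : 0 < d' by rewrite lt_min d0 /= divr_gt0 // mulr_gt0.
exists d' => // n u v Hb Hd Hs.
have dd : \sum_(i < n) (v i - u i) < d by apply: lt_le_trans Hs _; rewrite ge_min lexx.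
have := H n u v Hb Hd dd => Hf.
have Hs2 : \sum_(i < n) (v i - u i) < e / (2 * (L + 1)) by apply: lt_le_trans Hs _; rewrite ge_min lexx orbT.
have le1 : \sum_(i < n) `|k * f (v i) - Phi (v i) - (k * f (u i) - Phi (u i))|
   <= \sum_(i < n) `|f (v i) - f (u i)| + L * \sum_(i < n) (v i - u i).
  rewrite mulr_sumr -big_split /=; apply: ler_sum => i _.
  have [? [? ?]] := Hb i (ltn_ord i).
  have -> : k * f (v i) - Phi (v i) - (k * f (u i) - Phi (u i)) =
     k * (f (v i) - f (u i)) - (Phi (v i) - Phi (u i)) by ring.
  apply: le_trans (ler_normB _ _) _; apply: lerD; last exact: lip.
  rewrite normrM; apply: le_trans (ler_wpM2r _ k1) _ => //; by rewrite mul1r.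
have le2 : L * \sum_(i < n) (v i - u i) <= L * (e / (2 * (L + 1))).
  by rewrite ler_wpM2l // ltW.
have le3 : L * (e / (2 * (L + 1))) <= e / 2.
  have -> : L * (e / (2 * (L + 1))) = (e / 2) * (L / (L + 1)).
    by field; rewrite lt0r_neq0.
  apply: ler_piMr; first by rewrite ltW // divr_gt0.
  by rewrite ler_pdivrMr // mul1r; lra.
lra.
Qed.
End S5.

Section S6.
Context {R : realType}.
Notation mu := (@lebesgue_measure R).

Lemma ptwise (a b x y L : R) (f df Phi phi : R -> R) (N : set R) :
  a <= x -> x <= y -> y <= b -> 0 <= L ->
  abs_continuous_on a b f ->
  measurable N -> mu N = 0 ->
  (forall s, a <= s <= b -> ~ N s -> is_derive s (1:R) f (df s)) ->
  (forall s, is_derive s (1:R) Phi (phi s)) ->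
  (forall x y, a <= x -> x <= y -> y <= b -> `|Phi y - Phi x| <= L * (y - x)) ->
  (forall s, x <= s <= y -> `|df s| <= phi s) ->
  `|f y - f x| <= Phi y - Phi x.
Proof.
move=> ax xy yb L0 ac mN N0 dfN dPhi lip dfphi.
suff K : forall k, `|k| = 1 -> k * (f y - f x) <= Phi y - Phi x.
  rewrite ler_norml; apply/andP; split.
    have := K (-1) ltac:(by rewrite normrN normr1); lra.
  have := K 1 ltac:(by rewrite normr1); lra.
move=> k k1.
have k1' : `|k| <= 1 by rewrite k1.
have acf := @ac_lip R a b L k f Phi L0 k1' ac lip.
have : k * f y - Phi y <= k * f x - Phi x.
  apply: (@core R a b x y (fun t => k * f t - Phi t) N) => // s xs sy Ns e e0.
  have sab : a <= s <= b by apply/andP; split; lra.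
  have hd : is_derive s (1:R) (fun t => k * f t - Phi t) (k * df s - phi s).
    have := is_deriveB (is_deriveZ k (dfN s sab Ns)) (dPhi s).
    by [].
  have dle : k * df s - phi s <= 0.
    have : k * df s <= `|df s|.
      by apply: le_trans (ler_norm _) _; rewrite normrM k1 mul1r.
    have := dfphi s ltac:(apply/andP; split; lra).
    lra.
  exact: (@deriv_step R _ s y _ hd dle sy e e0).
lra.
Qed.
End S6.

Section S7.
Context {R : realType}.
Notation mu := (@lebesgue_measure R).

Lemma int_cont (p q : R) (F : R -> R) : continuous F ->
  mu.-integrable `[p, q] (EFin \o F).
Proof.
move=> cF; apply: continuous_compact_integrable; first exact: segment_compact.
exact: continuous_subspaceT.
Qed.

Lemma intB (p q : R) f g : mu.-integrable `[p, q] (EFin \o f) ->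
  mu.-integrable `[p, q] (EFin \o g) -> mu.-integrable `[p, q] (EFin \o (fun x => f x - g x)).
Proof.
move=> If Ig; have := @integrableB _ _ _ mu _ (measurable_itv _) _ _ If Ig.
by apply: eq_integrable => // x _ /=; rewrite EFinB.
Qed.

Lemma intZ (p q : R) f k : mu.-integrable `[p, q] (EFin \o f) ->
  mu.-integrable `[p, q] (EFin \o (fun x => k * f x)).
Proof.
move=> If; have := @integrableZl _ _ _ mu _ (measurable_itv _) k _ If.
by apply: eq_integrable => // x _ /=; rewrite EFinM.
Qed.

Lemma intM (p q : R) f g : mu.-integrable `[p, q] (EFin \o f) ->
  mu.-integrable `[p, q] (EFin \o g) -> (forall x, `[p, q]%classic x -> `|g x| <= 1) ->
  mu.-integrable `[p, q] (EFin \o (fun x => f x * g x)).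
Proof.
move=> If Ig g1.
have mg : measurable_fun `[p, q] g by apply/measurable_EFinP; exact: measurable_int Ig.
have bg : [bounded g x | x in `[p, q]].
  exists 1; split => // M M1 x Dx /=; apply: le_trans (g1 x Dx) _; exact: ltW.
have := @integrableMl _ _ _ mu _ (measurable_itv _) _ _ If mg bg.
by apply: eq_integrable => // x _ /=; rewrite EFinM.
Qed.

Lemma intN (p q : R) f : mu.-integrable `[p, q] (EFin \o f) ->
  mu.-integrable `[p, q] (EFin \o (fun x => `|f x|)).
Proof. by move=> If; exact: integrable_norm. Qed.

Lemma gen_bound (p1 q1 p2 q2 : R) (F w1 w2 : R -> R) (k : R) :
  mu.-integrable `[p1, q1] (EFin \o F) -> mu.-integrable `[p2, q2] (EFin \o F) ->
  mu.-integrable `[p1, q1] (EFin \o w1) -> mu.-integrable `[p2, q2] (EFin \o w2) ->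
  mu.-integrable `[p1, q1] (EFin \o cst k) -> mu.-integrable `[p2, q2] (EFin \o cst k) ->
  (forall x, `[p1, q1]%classic x -> `|w1 x| <= 1) -> (forall x, `[p2, q2]%classic x -> `|w2 x| <= 1) ->
  \int[mu]_(x in `[p1, q1]) w1 x = \int[mu]_(x in `[p2, q2]) w2 x ->
  `| \int[mu]_(x in `[p1, q1]) (F x * w1 x) - \int[mu]_(x in `[p2, q2]) (F x * w2 x) |
  <= \int[mu]_(x in `[p1, q1]) `|F x - k| + \int[mu]_(x in `[p2, q2]) `|F x - k|.
Proof.
have mS1 : measurable `[p1, q1]%classic := measurable_itv _.
have mS2 : measurable `[p2, q2]%classic := measurable_itv _.
move=> IF1 IF2 Iw1 Iw2 Ik1 Ik2 w11 w21 eqw.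
have IFk1 : mu.-integrable `[p1, q1] (EFin \o (fun x => F x - k)) by exact: intB.
have IFk2 : mu.-integrable `[p2, q2] (EFin \o (fun x => F x - k)) by exact: intB.
have I1 : mu.-integrable `[p1, q1] (EFin \o (fun x => (F x - k) * w1 x)) by exact: intM.
have I2 : mu.-integrable `[p2, q2] (EFin \o (fun x => (F x - k) * w2 x)) by exact: intM.
have E1 : \int[mu]_(x in `[p1, q1]) (F x * w1 x) =
    \int[mu]_(x in `[p1, q1]) ((F x - k) * w1 x) + k * \int[mu]_(x in `[p1, q1]) w1 x.
  rewrite -RintegralZl // -RintegralD //; last exact: intZ.
  by apply: eq_Rintegral => x _; ring.
have E2 : \int[mu]_(x in `[p2, q2]) (F x * w2 x) =
    \int[mu]_(x in `[p2, q2]) ((F x - k) * w2 x) + k * \int[mu]_(x in `[p2, q2]) w2 x.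
  rewrite -RintegralZl // -RintegralD //; last exact: intZ.
  by apply: eq_Rintegral => x _; ring.
rewrite E1 E2 eqw.
have -> : forall A B C : R, A + C - (B + C) = A - B by move=> *; ring.
apply: le_trans (ler_normB _ _) _.
apply: lerD.
- apply: le_trans (le_normr_Rintegral _ _) _ => //.
  apply: le_Rintegral => //; [exact: intN|exact: intN|].
  move=> x Sx; rewrite normrM; apply: ler_piMr => //; exact: w11.
- apply: le_trans (le_normr_Rintegral _ _) _ => //.
  apply: le_Rintegral => //; [exact: intN|exact: intN|].
  move=> x Sx; rewrite normrM; apply: ler_piMr => //; exact: w21.
Qed.

End S7.

Section S8.
Context {R : realType}.
Notation mu := (@lebesgue_measure R).

Lemma conv_bd (a b p q s : R) (df : R -> R) : convex_on a b (fun t => `|df t|) ->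
  a <= p -> p < q -> q <= b -> p <= s -> s <= q ->
  `|df s| <= ((q - s) * `|df p| + (s - p) * `|df q|) / (q - p).
Proof.
move=> cv ap pq qb ps sq.
have qp : q - p != 0 by rewrite subr_eq0 gt_eqF.
pose t := (q - s) / (q - p).
have t0 : 0 <= t by rewrite divr_ge0 //; lra.
have t1 : t <= 1 by rewrite ler_pdivrMr ?subr_gt0 //; lra.
have := cv p q t ltac:(apply/andP; split; lra) ltac:(apply/andP; split; lra)
  ltac:(apply/andP; split => //).
have -> : t * p + (1 - t) * q = s by rewrite /t; field.
move=> /le_trans; apply.
by rewrite /t le_eqVlt; apply/orP; left; apply/eqP; field.
Qed.

Lemma quad_poly (K0 K1 K2 p q : R) :
  (fun t => K0 + K1 * (t - p) ^+ 2 + K2 * (q - t) ^+ 2) =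
  horner (K0%:P + K1 *: ('X - p%:P) ^+ 2 + K2 *: (q%:P - 'X) ^+ 2).
Proof. by apply/funext => t; rewrite !hornerE. Qed.

Lemma cont_quad (K0 K1 K2 p q : R) :
  continuous (fun t => K0 + K1 * (t - p) ^+ 2 + K2 * (q - t) ^+ 2).
Proof. rewrite quad_poly; exact: continuous_horner. Qed.

Lemma quad_der (al be p q s : R) :
  is_derive s (1:R) (fun t => al * (t - p) ^+ 2 + be * (q - t) ^+ 2)
     (2 * al * (s - p) - 2 * be * (q - s)).
Proof.
have -> : (fun t => al * (t - p) ^+ 2 + be * (q - t) ^+ 2) =
   horner (al *: ('X - p%:P) ^+ 2 + be *: (q%:P - 'X) ^+ 2).
  by apply/funext => t; rewrite !hornerE.
apply: is_derive_eq.
rewrite derivD !derivZ !deriv_exp derivXsubC derivB derivC derivX /= !hornerE /=.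
ring.
Qed.

Lemma quad_lip (a b al be p q x y : R) : a <= p <= b -> a <= q <= b ->
  a <= x -> x <= y -> y <= b ->
  `|(al * (y - p) ^+ 2 + be * (q - y) ^+ 2) - (al * (x - p) ^+ 2 + be * (q - x) ^+ 2)|
    <= (2 * (b - a) * (`|al| + `|be|)) * (y - x).
Proof.
move=> /andP[ap pb] /andP[aq qb] ax xy yb.
have -> : (al * (y - p) ^+ 2 + be * (q - y) ^+ 2) - (al * (x - p) ^+ 2 + be * (q - x) ^+ 2)
   = (y - x) * (al * (y + x - 2 * p) - be * (2 * q - x - y)) by ring.
rewrite normrM ger0_norm ?subr_ge0 // mulrC ler_wpM2r ?subr_ge0 //.
apply: le_trans (ler_normB _ _) _; rewrite !normrM mulrDr.
apply: lerD; rewrite mulrC ler_wpM2r //.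
- by rewrite ler_norml; apply/andP; split; lra.
- by rewrite ler_norml; apply/andP; split; lra.
Qed.

End S8.

Section S9.
Context {R : realType}.
Notation mu := (@lebesgue_measure R).

Lemma int_sub (a b p q : R) (f : R -> R) : a <= p -> q <= b ->
  mu.-integrable `[a, b] (EFin \o f) -> mu.-integrable `[p, q] (EFin \o f).
Proof.
move=> ap qb; apply: integrableS => //.
by move=> x /=; rewrite !in_itv /= => /andP[? ?]; apply/andP; split; lra.
Qed.

Lemma int_absB (a b p q k : R) (f : R -> R) : a <= p -> q <= b ->
  mu.-integrable `[a, b] (EFin \o f) ->
  mu.-integrable `[p, q] (EFin \o (fun t => `|f t - k|)).
Proof.
move=> ap qb If; apply: (@intN R p q (fun t => f t - k)).
apply: intB; first exact: int_sub If.
exact: (@int_cont R p q (cst k) (@cst_continuous _ _ k)).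
Qed.

Lemma left_bd (a b c : R) (f df : R -> R) (N : set R) :
  a <= c -> c <= b ->
  mu.-integrable `[a, b] (EFin \o f) ->
  abs_continuous_on a b f -> measurable N -> mu N = 0 ->
  (forall s, a <= s <= b -> ~ N s -> is_derive s (1:R) f (df s)) ->
  convex_on a b (fun t => `|df t|) ->
  \int[mu]_(t in `[a, c]) `|f t - f c| <= (c - a) ^+ 2 * (`|df a| / 6 + `|df c| / 3).
Proof.
move=> ac cb If acf mN N0 dfN cv.
move: ac; rewrite le_eqVlt => /predU1P[<-|ltac].
  by rewrite set_itv1 Rintegral_set1 subrr expr0n mul0r.
have l0 : c - a != 0 by rewrite subr_eq0 gt_eqF.
pose al := `|df c| / (2 * (c - a)).
pose be := - `|df a| / (2 * (c - a)).
pose Phi t := al * (t - a) ^+ 2 + be * (c - t) ^+ 2.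
have L0 : 0 <= 2 * (b - a) * (`|al| + `|be|).
  by rewrite mulr_ge0 ?addr_ge0 // mulr_ge0 //; lra.
have ptw : forall t, a <= t <= c ->
    `|f t - f c| <= al * (c - a) ^+ 2 + (- al) * (t - a) ^+ 2 + (- be) * (c - t) ^+ 2.
  move=> t /andP[aT tc]; rewrite distrC.
  have := @ptwise R a b t c _ f df Phi (fun s => 2 * al * (s - a) - 2 * be * (c - s)) N
    aT tc cb L0 acf mN N0 dfN (quad_der al be a c).
  move=> /(_ _ _) H; apply: le_trans (H _ _) _.
  - move=> x y ax xy yb; apply: (@quad_lip R a b) => //; apply/andP; split; lra.
  - move=> s /andP[ts sc].
    apply: le_trans (@conv_bd R a b a c s df cv (lexx a) ltac cb ltac:(lra) sc) _.
    rewrite le_eqVlt; apply/orP; left; apply/eqP; rewrite /al /be; field.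
    by rewrite lt0r_neq0 // subr_gt0.
  - rewrite /Phi subrr expr0n /= mulr0 addr0; lra.
apply: (@le_trans _ _ (\int[mu]_(t in `[a, c]) (al * (c - a) ^+ 2 + (- al) * (t - a) ^+ 2 + (- be) * (c - t) ^+ 2))).
  apply: le_Rintegral.
  - exact: measurable_itv.
  - exact: int_absB If.
  - exact/int_cont/cont_quad.
  - by move=> t /=; rewrite in_itv /=; exact: ptw.
rewrite int_quad; last exact: ltW.
rewrite /al /be le_eqVlt; apply/orP; left; apply/eqP; field.
by rewrite lt0r_neq0 // subr_gt0.
Qed.

Lemma right_bd (a b c : R) (f df : R -> R) (N : set R) :
  a <= c -> c <= b ->
  mu.-integrable `[a, b] (EFin \o f) ->
  abs_continuous_on a b f -> measurable N -> mu N = 0 ->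
  (forall s, a <= s <= b -> ~ N s -> is_derive s (1:R) f (df s)) ->
  convex_on a b (fun t => `|df t|) ->
  \int[mu]_(t in `[c, b]) `|f t - f c| <= (b - c) ^+ 2 * (`|df c| / 3 + `|df b| / 6).
Proof.
move=> ac cb If acf mN N0 dfN cv.
move: cb; rewrite le_eqVlt => /predU1P[->|ltcb].
  by rewrite set_itv1 Rintegral_set1 subrr expr0n mul0r.
pose al := `|df b| / (2 * (b - c)).
pose be := - `|df c| / (2 * (b - c)).
pose Phi t := al * (t - c) ^+ 2 + be * (b - t) ^+ 2.
have L0 : 0 <= 2 * (b - a) * (`|al| + `|be|).
  by rewrite mulr_ge0 ?addr_ge0 // mulr_ge0 //; lra.
have ptw : forall t, c <= t <= b ->
    `|f t - f c| <= (- be) * (b - c) ^+ 2 + al * (t - c) ^+ 2 + be * (b - t) ^+ 2.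
  move=> t /andP[cT tb].
  have := @ptwise R a b c t _ f df Phi (fun s => 2 * al * (s - c) - 2 * be * (b - s)) N
    ac cT tb L0 acf mN N0 dfN (quad_der al be c b).
  move=> /(_ _ _) H; apply: le_trans (H _ _) _.
  - move=> x y ax xy yb; apply: (@quad_lip R a b) => //; apply/andP; split; lra.
  - move=> s /andP[cs st].
    apply: le_trans (@conv_bd R a b c b s df cv ac ltcb (lexx b) cs ltac:(lra)) _.
    rewrite le_eqVlt; apply/orP; left; apply/eqP; rewrite /al /be; field.
    by rewrite lt0r_neq0 // subr_gt0.
  - rewrite /Phi subrr expr0n /= mulr0 ?addr0 ?add0r; lra.
apply: (@le_trans _ _ (\int[mu]_(t in `[c, b]) ((- be) * (b - c) ^+ 2 + al * (t - c) ^+ 2 + be * (b - t) ^+ 2))).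
  apply: le_Rintegral.
  - exact: measurable_itv.
  - exact: int_absB If.
  - exact/int_cont/cont_quad.
  - by move=> t /=; rewrite in_itv /=; exact: ptw.
rewrite int_quad; last exact: ltW.
rewrite /al /be le_eqVlt; apply/orP; left; apply/eqP; field.
by rewrite lt0r_neq0 // subr_gt0.
Qed.

End S9.

Section S10.
Context {R : realType}.
Notation mu := (@lebesgue_measure R).

Lemma int_cst (p q k : R) : p <= q -> \int[mu]_(t in `[p, q]) k = k * (q - p).
Proof.
move=> pq; rewrite Rintegral_cst; last exact: measurable_itv.
congr (_ * _).
apply: (eq_trans (congr1 fine (lebesgue_measure_itv `[p, q]%R))).
rewrite /= lte_fin.
move: pq; rewrite le_eqVlt => /predU1P[->|->]; last by rewrite -EFinD.
by rewrite ltxx subrr.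
Qed.

Lemma int_split (p c q : R) (F : R -> R) : p <= c -> c <= q ->
  mu.-integrable `[p, q] (EFin \o F) ->
  \int[mu]_(t in `[p, q]) F t = \int[mu]_(t in `[p, c]) F t + \int[mu]_(t in `[c, q]) F t.
Proof.
move=> pc cq IF.
have := @Rintegral_itvB R F (BLeft p) (BRight q) c IF.
rewrite !bnd_simp => /(_ pc cq) H.
have Ic : mu.-integrable `]c, q] (EFin \o F).
  by apply: integrableS IF => // x /=; rewrite !in_itv /= => /andP[? ?]; apply/andP; split; lra.
have E := @Rintegral_itv_obnd_cbnd R c (BRight q) F Ic.
rewrite -E -H; ring.
Qed.

End S10.

Theorem corollary2p3 (R : realType) (a b : R) (f g df : R -> R) :
  0 <= a -> a < b ->
  (@lebesgue_measure R).-integrable `[a, b] (EFin \o f) ->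
  (@lebesgue_measure R).-integrable `[a, b] (EFin \o g) ->
  (forall t, a <= t <= b -> 0 <= g t <= 1) ->
  {ae (@lebesgue_measure R),
     forall x, a <= x <= b -> is_derive x 1 f (df x)} ->
  (@lebesgue_measure R).-integrable `[a, b]
      (EFin \o (fun t => g t * df t)) ->
  abs_continuous_on a b f ->
  convex_on a b (fun t => `|df t|) ->
  let lambda := \int[@lebesgue_measure R]_(t in `[a, b]) g t in
  `| \int[@lebesgue_measure R]_(t in `[a, a + lambda]) f t
     - \int[@lebesgue_measure R]_(t in `[a, b]) (f t * g t) |
    <= lambda ^+ 2 / 6 * `|df a|
       + (lambda ^+ 2 + (b - a - lambda) ^+ 2) / 3 * `|df (a + lambda)|
       + (b - a - lambda) ^+ 2 / 6 * `|df b|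
  /\
  `| \int[@lebesgue_measure R]_(t in `[a, b]) (f t * g t)
     - \int[@lebesgue_measure R]_(t in `[b - lambda, b]) f t |
    <= lambda ^+ 2 / 6 * `|df b|
       + (lambda ^+ 2 + (b - a - lambda) ^+ 2) / 3 * `|df (b - lambda)|
       + (b - a - lambda) ^+ 2 / 6 * `|df a|.
Proof.
move=> a0 ab If Ig g01 ae _ acf cv lambda.
have [N [mN N0 HN]] := ae.
have dfN : forall s, a <= s <= b -> ~ N s -> is_derive s (1:R) f (df s).
  move=> s sab Ns; apply: contrapT => nd; apply: Ns; apply: HN => /=.
  by move=> /(_ sab).
have Ig1 : forall p q, a <= p -> q <= b -> (@lebesgue_measure R).-integrable `[p, q] (EFin \o g).
  by move=> p q ap qb; exact: int_sub Ig.
have If1 : forall p q, a <= p -> q <= b -> (@lebesgue_measure R).-integrable `[p, q] (EFin \o f).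
  by move=> p q ap qb; exact: int_sub If.
have Icst : forall p q k, (@lebesgue_measure R).-integrable `[p, q] (EFin \o cst k).
  by move=> p q k; exact: (@int_cont R p q (cst k) (@cst_continuous _ _ k)).
have g1 : forall p q, a <= p -> q <= b -> forall x, `[p, q]%classic x -> `|g x| <= 1.
  move=> p q ap qb x /=; rewrite in_itv /= => /andP[px xq].
  have /andP[? ?] := g01 x ltac:(apply/andP; split; lra).
  by rewrite ger0_norm.
have g1' : forall p q, a <= p -> q <= b -> forall x, `[p, q]%classic x -> `|1 - g x| <= 1.
  move=> p q ap qb x /=; rewrite in_itv /= => /andP[px xq].
  have /andP[? ?] := g01 x ltac:(apply/andP; split; lra).
  by rewrite ger0_norm; lra.
have Ifg : forall p q, a <= p -> q <= b ->
    (@lebesgue_measure R).-integrable `[p, q] (EFin \o (fun t => f t * g t)).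
  by move=> p q ap qb; apply: intM; [exact: If1|exact: Ig1|exact: g1].
have Iw : forall p q, a <= p -> q <= b ->
    (@lebesgue_measure R).-integrable `[p, q] (EFin \o (fun t => 1 - g t)).
  by move=> p q ap qb; apply: intB; [exact: Icst|exact: Ig1].
have l0 : 0 <= lambda.
  apply: Rintegral_ge0 => x /=; rewrite in_itv /= => xab.
  by have /andP[] := g01 x xab.
have lba : lambda <= b - a.
  rewrite -[b - a]mul1r -int_cst; last exact: ltW.
  apply: le_Rintegral; [exact: measurable_itv|exact: Ig|exact: Icst|].
  by move=> x /=; rewrite in_itv /= => xab; have /andP[] := g01 x xab.
have lam_split : forall c, a <= c -> c <= b ->
    lambda = \int[@lebesgue_measure R]_(t in `[a, c]) g t + \int[@lebesgue_measure R]_(t in `[c, b]) g t.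
  by move=> c ac cb; rewrite /lambda (@int_split R a c b g ac cb Ig).
split.
- set c := a + lambda.
  have ac : a <= c by rewrite /c; lra.
  have cb : c <= b by rewrite /c; lra.
  rewrite (@int_split R a c b _ ac cb (Ifg a b (lexx a) (lexx b))).
  have -> : \int[@lebesgue_measure R]_(t in `[a, c]) f t -
      (\int[@lebesgue_measure R]_(t in `[a, c]) (f t * g t) + \int[@lebesgue_measure R]_(t in `[c, b]) (f t * g t))
    = \int[@lebesgue_measure R]_(t in `[a, c]) (f t * (1 - g t)) - \int[@lebesgue_measure R]_(t in `[c, b]) (f t * g t).
    have -> : \int[@lebesgue_measure R]_(t in `[a, c]) (f t * (1 - g t)) =
        \int[@lebesgue_measure R]_(t in `[a, c]) (f t - f t * g t).
      by apply: eq_Rintegral => t _; ring.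
    rewrite RintegralB; [ring|exact: measurable_itv|exact: If1|exact: Ifg].
  apply: le_trans.
    apply: (@gen_bound R a c c b f (fun t => 1 - g t) g (f c)).
    all: try exact: If1; try exact: Ig1; try exact: Iw; try exact: Icst; try exact: g1; try exact: g1'.
    rewrite RintegralB; [|exact: measurable_itv|exact: Icst|exact: Ig1].
    rewrite int_cst // mul1r.
    have := lam_split c ac cb; have : c - a = lambda by rewrite /c; ring.
    lra.
  apply: le_trans (lerD (@left_bd R a b c f df N ac cb If acf mN N0 dfN cv)
    (@right_bd R a b c f df N ac cb If acf mN N0 dfN cv)) _.
  have -> : c - a = lambda by rewrite /c; ring.
  have -> : b - c = b - a - lambda by rewrite /c; ring.
  lra.
- set d := b - lambda.
  have ad : a <= d by rewrite /d; lra.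
  have db : d <= b by rewrite /d; lra.
  rewrite (@int_split R a d b _ ad db (Ifg a b (lexx a) (lexx b))).
  have -> : \int[@lebesgue_measure R]_(t in `[a, d]) (f t * g t) + \int[@lebesgue_measure R]_(t in `[d, b]) (f t * g t)
      - \int[@lebesgue_measure R]_(t in `[d, b]) f t
    = \int[@lebesgue_measure R]_(t in `[a, d]) (f t * g t) - \int[@lebesgue_measure R]_(t in `[d, b]) (f t * (1 - g t)).
    have -> : \int[@lebesgue_measure R]_(t in `[d, b]) (f t * (1 - g t)) =
        \int[@lebesgue_measure R]_(t in `[d, b]) (f t - f t * g t).
      by apply: eq_Rintegral => t _; ring.
    rewrite RintegralB; [ring|exact: measurable_itv|exact: If1|exact: Ifg].
  apply: le_trans.
    apply: (@gen_bound R a d d b f g (fun t => 1 - g t) (f d)).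
    all: try exact: If1; try exact: Ig1; try exact: Iw; try exact: Icst; try exact: g1; try exact: g1'.
    rewrite RintegralB; [|exact: measurable_itv|exact: Icst|exact: Ig1].
    rewrite int_cst // mul1r.
    have := lam_split d ad db; have : b - d = lambda by rewrite /d; ring.
    lra.
  apply: le_trans (lerD (@left_bd R a b d f df N ad db If acf mN N0 dfN cv)
    (@right_bd R a b d f df N ad db If acf mN N0 dfN cv)) _.
  have -> : d - a = b - a - lambda by rewrite /d; ring.
  have -> : b - d = lambda by rewrite /d; ring.
  lra.
Qed.
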